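(* Let $D$ be a strong nonseparable digraph, let $H$ be a strong nonseparable subdigraph of $D$, and let $P=(x_0,x_1,\ldots,x_{r-1},x_r)$ be an ear of $H$ in $D$ with length $l(P)=r\geq 2$. If $H$ has a kernel $N$ and $H'=H\cup P$ has no kernel, then one of the following holds: (1) $x_0,x_r\in N$ and $l(P)$ is odd; (2) $x_0\in N$, $x_r\notin N$ and $l(P)$ is even.
   Context: All digraphs are finite, without loops or multiple arcs. Paths and cycles are directed; the length of a path is its number of arcs. A digraph is strong if for every ordered pair of vertices $x,y$ there is a directed path from $x$ to $y$; it is nonseparable if its underlying undirected graph is nonseparable (has no cut vertex). For a subdigraph $H$ of $D$, an ear of $H$ in $D$ is a directed path $(x_0,\ldots,x_r)$ in $D$ whose end vertices $x_0,x_r$ lie in $H$ and whose internal vertices $x_1,\ldots,x_{r-1}$ do not lie in $H$ (or a directed cycle with exactly one vertex $x_0=x_r$ in $H$). A kernel of a digraph is a set $N$ of vertices that is independent (no arc between two of its vertices) and absorbent (every vertex not in $N$ has an out-neighbour in $N$). *)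

(* Defs.v *)
From mathcomp Require Import all_boot.

Set Implicit Arguments. Unset Strict Implicit. Unset Printing Implicit Defensive.

(* A digraph with vertex set contained in a finType T is given by a vertex
   set V : {set T} and an arc relation A : rel T (arcs only among V are used). *)

Definition arcs_in (T : finType) (V : {set T}) (A : rel T) : rel T :=
  fun x y => [&& x \in V, y \in V & A x y].

Definition strong (T : finType) (V : {set T}) (A : rel T) : Prop :=
  forall x y, x \in V -> y \in V -> connect (arcs_in V A) x y.

Definition uconnected (T : finType) (V : {set T}) (A : rel T) : Prop :=
  forall x y, x \in V -> y \in V ->
    connect (arcs_in V (fun u v => A u v || A v u)) x y.

Definition nonseparable (T : finType) (V : {set T}) (A : rel T) : Prop :=
  uconnected V A /\ forall v, v \in V -> uconnected (V :\ v) A.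

Definition subdigraph (T : finType) (E : rel T) (VH : {set T}) (AH : rel T) : Prop :=
  forall x y, AH x y -> [&& x \in VH, y \in VH & E x y].

(* The walk x0 :: s = (x_0, x_1, ..., x_r), r = size s, is an ear of (VH,AH) in (setT,E):
   a directed path (or a cycle with x_0 = x_r), endpoints in VH, internal vertices
   outside VH. *)
Definition ear (T : finType) (E : rel T) (VH : {set T}) (x0 : T) (s : seq T) : Prop :=
  [/\ 0 < size s, path E x0 s,
      x0 \in VH /\ last x0 s \in VH,
      all (fun v => v \notin VH) (behead (belast x0 s)) &
      uniq (belast x0 s) /\ uniq s].

Definition union_verts (T : finType) (VH : {set T}) (x0 : T) (s : seq T) : {set T} :=
  VH :|: [set v | v \in x0 :: s].

Definition union_arcs (T : finType) (AH : rel T) (x0 : T) (s : seq T) : rel T :=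
  fun x y => AH x y || ((x, y) \in zip (x0 :: s) s).

Definition kernel (T : finType) (V : {set T}) (A : rel T) (N : {set T}) : Prop :=
  [/\ N \subset V,
      (forall x y, x \in N -> y \in N -> ~~ A x y) &
      (forall v, v \in V -> v \notin N -> exists2 y, y \in N & A v y)].

Definition has_kernel (T : finType) (V : {set T}) (A : rel T) : Prop :=
  exists N, kernel V A N.

(* Main.v *)
Require Import Defs.
From mathcomp Require Import all_boot zify.

Lemma belast_take (T : Type) (x : T) (s : seq T) : belast x s = take (size s) (x :: s).
Proof. by elim: s x => [|y t IH] x //=; rewrite IH. Qed.

Lemma baux (a b : bool) : ~~ a != b -> a != b -> False.
Proof. by case: a; case: b. Qed.
Lemma baux2 (a b : bool) : ~~ (~~ a != b) -> a != b.
Proof. by case: a; case: b. Qed.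
Lemma baux3 (b : bool) : ~~ (true != b) -> b.
Proof. by case: b. Qed.

Lemma key (T : finType) (E : rel T) (VH : {set T}) (AH : rel T)
    (x0 : T) (s : seq T) (N : {set T}) :
  subdigraph E VH AH ->
  x0 \in VH -> last x0 s \in VH ->
  all (fun v => v \notin VH) (behead (belast x0 s)) ->
  uniq (belast x0 s) -> 2 <= size s ->
  kernel VH AH N ->
  (x0 \in N -> odd (size s).-1 = (last x0 s \in N)) ->
  has_kernel (union_verts VH x0 s) (union_arcs AH x0 s).
Proof.
move=> sub x0H lH intl ub r2 [NV Nind Nabs] hx1.
set r := size s in r2 hx1 *; set L := last x0 s \in N in hx1 *.
set p := x0 :: s.
have sp : size p = r.+1 by [].
have F4 : nth x0 p r = last x0 s by rewrite /p -[last x0 s]/(last x0 (x0 :: s)) -nth_last.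
have F1 : forall i, 0 < i < r -> nth x0 p i \notin VH.
  move=> i /andP [i0 ir]; move/all_nthP: intl; move/(_ x0 i.-1).
  rewrite nth_behead belast_take nth_take; last by lia.
  rewrite prednK //; apply.
  rewrite size_behead size_take -/r sp ltnSn; lia.
have F3 : forall i j, i < r -> j < r -> nth x0 p i = nth x0 p j -> i = j.
  move=> i j ir jr e; apply/eqP.
  move: ub; rewrite belast_take => ub.
  rewrite -(nth_uniq x0 _ _ ub) ?size_take -/r ?sp ?ltnSn // !nth_take //.
  by rewrite e.
have F2 : forall x y, (x, y) \in zip p s ->
    exists2 i, i < r & x = nth x0 p i /\ y = nth x0 p i.+1.
  move=> x y /(nthP (x0, x0)) [i]; rewrite size_zip -/r sp => ir.
  have {}ir : i < r by lia.
  rewrite nth_zip_cond size_zip sp.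
  have -> : i < minn r.+1 r by lia.
  move=> [<- <-]; exists i => //.
have F6 : forall i, i < r -> (nth x0 p i, nth x0 p i.+1) \in zip p s.
  move=> i ir; apply/(nthP (x0, x0)); exists i; first by rewrite size_zip sp -/r; move: ir; clear; lia.
  rewrite nth_zip_cond size_zip sp.
  by have -> : i < minn r.+1 r by lia.
have NVH : forall v, v \in N -> v \in VH by move=> v /(subsetP NV).
pose K := N :|: [set v | [exists i : 'I_r, [&& 0 < val i, nth x0 p i == v & odd (r - i) != L]]].
have KVH : forall v, v \in VH -> (v \in K) = (v \in N).
  move=> v vH; rewrite inE in_set; case: (v \in N) => //=.
  apply/negbTE/negP => /existsP [i /and3P [i0 /eqP e _]].
  by move: (F1 i); rewrite e vH i0 ltn_ord => /(_ isT).
have Kint : forall i, 0 < i < r -> (nth x0 p i \in K) = (odd (r - i) != L).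
  move=> i /andP [i0 ir]; rewrite inE in_set.
  have -> : (nth x0 p i \in N) = false.
    by apply/negP => /NVH; move: (F1 i); rewrite i0 ir => /(_ isT) /negP.
  apply/existsP/idP => [[j /and3P [j0 /eqP e o]]|o].
    by have := F3 _ _ (ltn_ord j) ir e => eji; rewrite -eji.
  by exists (Ordinal ir); rewrite /= i0 eqxx o.
exists K; split.
- apply/subsetP => v; rewrite /union_verts !inE => /orP [vN|/existsP [i /and3P [i0 /eqP <- _]]].
    by rewrite NVH.
  apply/orP; right; rewrite -in_cons; apply: mem_nth; rewrite sp.
  by move: (ltn_ord i); clear; lia.
- move=> x y xK yK; rewrite /union_arcs; apply/negP => /orP [a|z].
    case/and3P: (sub x y a) => xH yH _.
    rewrite KVH // in xK; rewrite KVH // in yK.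
    by move: (Nind x y xK yK); rewrite a.
  case: (F2 x y z) => i ir [ex ey].
  case: (posnP i) => [i0|ipos].
    subst x y; rewrite i0 /= in xK yK.
    rewrite KVH // in xK.
    have h1 : 0 < 1 < r by rewrite r2.
    have := Kint 1 h1; rewrite /= => e; rewrite e subn1 hx1 // in yK.
    by rewrite eqxx in yK.
  have hi : 0 < i < r by rewrite ipos ir.
  subst x y; rewrite Kint // in xK.
  case: (ltnP i.+1 r) => [i1r|ri].
    have hi1 : 0 < i.+1 < r by rewrite i1r.
    rewrite Kint // in yK.
    rewrite -(subnSK ir) /= in xK; move: xK yK. apply: baux.
  have er : i.+1 = r by apply/eqP; rewrite eqn_leq ri ir.
  rewrite er F4 KVH // in yK.
  have e1 : r - i = 1 by lia.
  by rewrite e1 /= /L yK in xK.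
- move=> v vV vK; case: (boolP (v \in VH)) => vH.
    rewrite KVH // in vK; case: (Nabs v vH vK) => y yN a; exists y.
      by rewrite inE yN.
    by rewrite /union_arcs a.
  move: vV; rewrite /union_verts !inE (negbTE vH) /= => vp.
  have : v \in p by rewrite in_cons.
  case/(nthP x0) => i; rewrite sp ltnS => ir ev.
  have i0 : 0 < i.
    case: (posnP i) => // i0; move: vH; by rewrite -ev i0 /= x0H.
  have {}ir : i < r.
    rewrite ltn_neqAle ir andbT; apply/eqP => ei; move: vH.
    by rewrite -ev ei F4 lH.
  exists (nth x0 p i.+1); last by rewrite /union_arcs -ev F6 ?orbT.
  have hi : 0 < i < r by rewrite i0 ir.
  rewrite -ev Kint // in vK.
  case: (ltnP i.+1 r) => [i1r|ri].
    have hi1 : 0 < i.+1 < r by rewrite i1r.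
    rewrite Kint //.
    by rewrite -(subnSK ir) /= in vK; move: vK; apply: baux2.
  have er : i.+1 = r by apply/eqP; rewrite eqn_leq ri ir.
  rewrite er F4 KVH //.
  have e1 : r - i = 1 by lia.
  by move: vK; rewrite e1 /= -/L; apply: baux3.
Qed.

Theorem mainTheorem10 (T : finType) (E : rel T) (VH : {set T}) (AH : rel T)
    (x0 : T) (s : seq T) (N : {set T}) :
  irreflexive E ->
  strong [set: T] E -> nonseparable [set: T] E ->
  subdigraph E VH AH -> strong VH AH -> nonseparable VH AH ->
  ear E VH x0 s -> 2 <= size s ->
  kernel VH AH N ->
  ~ has_kernel (union_verts VH x0 s) (union_arcs AH x0 s) ->
  (x0 \in N /\ last x0 s \in N /\ odd (size s)) \/
  (x0 \in N /\ last x0 s \notin N /\ ~~ odd (size s)).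
Proof.
move=> _ _ _ sub _ _ [s0 pth [x0H lH] intl [ub us]] r2 kN nok.
have hk := @key T E VH AH x0 s N sub x0H lH intl ub r2 kN.
have op : odd (size s).-1 = ~~ odd (size s).
  by rewrite -{2}(prednK s0) /=; case: odd.
case hx: (x0 \in N); last by exfalso; apply: nok; apply: hk; rewrite hx.
case hL: (last x0 s \in N); case ho: (odd (size s)); auto;
  by exfalso; apply: nok; apply: hk => _; rewrite op ho hL.
Qed.
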